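(* Let $\varphi\colon G\to G$ and $\psi\colon H\to H$ be endomorphisms of abelian groups and suppose $\psi$ is a factor of $\varphi$. Then: (1) if $G$ is torsion and $\varphi$ is positively expansive, then $\psi$ is positively expansive; (2) if $G$ is torsion, $\varphi$ and $\psi$ are automorphisms and $\varphi$ is expansive, then $\psi$ is expansive; (3) if $\varphi$ and $\psi$ are conjugate, then $\varphi$ is positively expansive if and only if $\psi$ is, and, when they are automorphisms, $\varphi$ is expansive if and only if $\psi$ is.
   Context: $\mathbb N=\{0,1,2,\dots\}$. An endomorphism $\varphi$ of an abelian group $G$ is positively expansive if there is a finite subgroup $S\leq G$ such that for every finite subgroup $F\leq G$ there is $n\in\mathbb N$ with $F\subseteq\sum_{k=0}^n\varphi^kS$. An automorphism $\varphi$ is expansive if there is a finite subgroup $S\leq G$ such that for every finite subgroup $F\leq G$ there is $n\in\mathbb N$ with $F\subseteq\sum_{|k|\leq n}\varphi^kS$. $\psi$ is a factor of $\varphi$ if there is a surjective homomorphism $\pi\colon G\to H$ with $\pi\circ\varphi=\psi\circ\pi$; they are conjugate if such a $\pi$ can be chosen to be an isomorphism. *)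

(* Defs.v *)
From HB Require Import structures.
From mathcomp Require Import all_boot all_order all_algebra.
Set Implicit Arguments. Unset Strict Implicit. Unset Printing Implicit Defensive.
Import GRing.Theory.
Local Open Scope ring_scope.

Definition is_subgroup (G : zmodType) (S : G -> Prop) : Prop :=
  S 0 /\ forall x y, S x -> S y -> S (x - y).

Definition is_finite_set (G : zmodType) (S : G -> Prop) : Prop :=
  exists s : seq G, forall x, S x <-> x \in s.

Definition finite_subgroup (G : zmodType) (S : G -> Prop) : Prop :=
  is_subgroup S /\ is_finite_set S.

Definition in_pos_sum (G : zmodType) (phi : G -> G) (S : G -> Prop) (n : nat)
    (x : G) : Prop :=
  exists s : nat -> G, (forall k, (k <= n)%N -> S (s k)) /\
    x = \sum_(k < n.+1) iter k phi (s k).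

(* x \in \sum_{|k| <= n} phi^k S, where phi^{-1} = phii *)
Definition in_bil_sum (G : zmodType) (phi phii : G -> G) (S : G -> Prop)
    (n : nat) (x : G) : Prop :=
  exists s t : nat -> G,
    (forall k, (k <= n)%N -> S (s k)) /\ (forall k, (k < n)%N -> S (t k)) /\
    x = \sum_(k < n.+1) iter k phi (s k) + \sum_(k < n) iter k.+1 phii (t k).

Definition pos_expansive (G : zmodType) (phi : G -> G) : Prop :=
  exists S, finite_subgroup S /\
    forall F, finite_subgroup F -> exists n, forall x, F x -> in_pos_sum phi S n x.

(* for an automorphism phi with inverse phii *)
Definition expansive (G : zmodType) (phi phii : G -> G) : Prop :=
  exists S, finite_subgroup S /\
    forall F, finite_subgroup F -> exists n, forall x, F x -> in_bil_sum phi phii S n x.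

Definition torsion (G : zmodType) : Prop :=
  forall x : G, exists n, (0 < n)%N /\ x *+ n = 0.

Definition is_factor (G H : zmodType) (phi : {additive G -> G})
    (psi : {additive H -> H}) : Prop :=
  exists pi : {additive G -> H}, (forall y : H, exists x : G, pi x = y) /\ forall x, pi (phi x) = psi (pi x).

Definition conjugate (G H : zmodType) (phi : {additive G -> G})
    (psi : {additive H -> H}) : Prop :=
  exists pi : {additive G -> H}, bijective pi /\ forall x, pi (phi x) = psi (pi x).

(* Main.v *)
Require Import Defs.
From mathcomp Require Import all_boot all_order all_algebra.
From Stdlib Require Import Classical.
From mathcomp Require Import zify.
Import GRing.Theory.
Local Open Scope ring_scope.

Section Aux.
Variables G H : zmodType.

Definition img (pi : G -> H) (S : G -> Prop) : H -> Prop :=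
  fun y => exists x, S x /\ pi x = y.

Lemma morph0 (pi : G -> H) : (forall x y, pi (x - y) = pi x - pi y) -> pi 0 = 0.
Proof. by move=> pB; rewrite -(subrr 0) pB subrr. Qed.

Lemma morphD (pi : G -> H) : (forall x y, pi (x - y) = pi x - pi y) ->
  forall x y, pi (x + y) = pi x + pi y.
Proof.
move=> pB x y.
have pN : pi (- y) = - pi y.
  by have := pB 0 y; rewrite sub0r morph0 // sub0r.
by have := pB x (- y); rewrite opprK pN opprK.
Qed.

Lemma image_fsg (pi : G -> H) (pB : forall x y, pi (x - y) = pi x - pi y) S :
  finite_subgroup S -> finite_subgroup (img pi S).
Proof.
move=> [[S0 SB] [s hs]]; split; first split.
- by exists 0; split => //; rewrite morph0.
- move=> _ _ [a [Sa <-]] [b [Sb <-]]; exists (a - b); split; [exact: SB | exact: pB].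
- exists (map pi s) => y; split.
  + by move=> [a [/hs Sa <-]]; apply: map_f.
  + by move=> /mapP [a /hs Sa ->]; exists a.
Qed.

Lemma pre_fsg (pi : G -> H) (g : H -> G) (pB : forall x y, pi (x - y) = pi x - pi y)
  (c1 : cancel pi g) (c2 : cancel g pi) F :
  finite_subgroup F -> finite_subgroup (fun x => F (pi x)).
Proof.
move=> [[F0 FB] [s hs]]; split; first split.
- by rewrite morph0.
- by move=> x y Fx Fy; rewrite pB; apply: FB.
- exists (map g s) => x; split.
  + by move=> /hs Fx; rewrite -(c1 x); apply: map_f.
  + by move=> /mapP [a /hs Fa ->]; rewrite c2.
Qed.

Lemma iter_comm (pi : G -> H) (f : G -> G) (h : H -> H) :
  (forall x, pi (f x) = h (pi x)) -> forall k x, pi (iter k f x) = iter k h (pi x).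
Proof. by move=> c; elim=> [|k IH] x //=; rewrite c IH. Qed.

Lemma push_pos (pi : G -> H) (pB : forall x y, pi (x - y) = pi x - pi y)
  (phi : G -> G) (psi : H -> H) (c : forall x, pi (phi x) = psi (pi x)) S n x :
  in_pos_sum phi S n x -> in_pos_sum psi (img pi S) n (pi x).
Proof.
move=> [s [hs ->]]; exists (fun k => pi (s k)); split.
  by move=> k kn; exists (s k); split => //; apply: hs.
rewrite (big_morph _ (morphD _ pB) (morph0 _ pB)); apply: eq_bigr => k _.
exact: iter_comm.
Qed.

Lemma push_bil (pi : G -> H) (pB : forall x y, pi (x - y) = pi x - pi y)
  (phi phii : G -> G) (psi psii : H -> H) (c : forall x, pi (phi x) = psi (pi x))
  (ci : forall x, pi (phii x) = psii (pi x)) S n x :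
  in_bil_sum phi phii S n x -> in_bil_sum psi psii (img pi S) n (pi x).
Proof.
move=> [s [t [hs [ht ->]]]]; exists (fun k => pi (s k)), (fun k => pi (t k)); split.
  by move=> k kn; exists (s k); split => //; apply: hs.
split.
  by move=> k kn; exists (t k); split => //; apply: ht.
rewrite morphD // !(big_morph _ (morphD _ pB) (morph0 _ pB)); congr (_ + _);
  apply: eq_bigr => k _; exact: iter_comm.
Qed.

Lemma iter0 (f : G -> G) : f 0 = 0 -> forall k, iter k f 0 = 0.
Proof. by move=> f0; elim=> //= k ->. Qed.

Lemma pad_sum (f : nat -> G -> G) (s : nat -> G) n n' :
  (forall k, f k 0 = 0) -> (n <= n')%N ->
  \sum_(k < n) f k (s k) = \sum_(k < n') f k (if (k < n)%N then s k else 0).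
Proof.
move=> f0 le; rewrite (big_ord_widen n' (fun k => f k (s k))) // big_mkcond /=.
by apply: eq_bigr => k _; case: ifP => // _; rewrite f0.
Qed.

Lemma mono_pos (phi : G -> G) (phi0 : phi 0 = 0) S (S0 : S 0) n n' x :
  (n <= n')%N -> in_pos_sum phi S n x -> in_pos_sum phi S n' x.
Proof.
move=> le [s [hs ->]]; exists (fun k => if (k < n.+1)%N then s k else 0); split.
  by move=> k _; case: ifP => // kn; apply: hs.
by apply: (pad_sum (fun k => iter k phi)) => //; apply: iter0.
Qed.

Lemma mono_bil (phi phii : G -> G) (phi0 : phi 0 = 0) (phii0 : phii 0 = 0)
  S (S0 : S 0) n n' x :
  (n <= n')%N -> in_bil_sum phi phii S n x -> in_bil_sum phi phii S n' x.
Proof.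
move=> le [s [t [hs [ht ->]]]].
exists (fun k => if (k < n.+1)%N then s k else 0), (fun k => if (k < n)%N then t k else 0).
split; first by move=> k _; case: ifP => // kn; apply: hs.
split; first by move=> k _; case: ifP => // kn; apply: ht.
congr (_ + _).
  by apply: (pad_sum (fun k => iter k phi)) => //; apply: iter0.
by apply: (pad_sum (fun k => iter k.+1 phii)) => // k; apply: iter0.
Qed.

Lemma cyclic_fsg (x : G) m : (0 < m)%N -> x *+ m = 0 ->
  finite_subgroup (fun z => exists i, (i <= m)%N /\ z = x *+ i).
Proof.
move=> m0 xm; split; first split.
- by exists 0%N.
- move=> _ _ [i [im ->]] [j [jm ->]].
  case: (leqP j i) => ji.
    by exists (i - j)%N; split; [clear -im ji; lia | rewrite mulrnBr].
  exists (i + (m - j))%N; split.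
    clear -im jm ji; lia.
  rewrite mulrnDr mulrnBr //.
  by rewrite xm sub0r.
- exists [seq x *+ i | i <- iota 0 m.+1] => z; split.
  + move=> [i [im ->]]; apply: map_f; by rewrite mem_iota add0n ltnS.
  + by move=> /mapP [i]; rewrite mem_iota add0n ltnS => /andP [_ im] ->; exists i.
Qed.

End Aux.
Arguments img {G H}.
Arguments image_fsg {G H pi} pB {S}.
Arguments pre_fsg {G H pi g} pB c1 c2 {F}.
Arguments cyclic_fsg {G x m}.
Arguments push_pos {G H pi} pB {phi psi} c {S n x}.
Arguments push_bil {G H pi} pB {phi phii psi psii} c ci {S n x}.
Arguments mono_pos {G phi} phi0 {S} S0 {n n' x}.
Arguments mono_bil {G phi phii} phi0 phii0 {S} S0 {n n' x}.

Lemma uniform (H : zmodType) (P : nat -> H -> Prop)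
  (mono : forall n n' y, (n <= n')%N -> P n y -> P n' y) (F : H -> Prop) :
  is_finite_set F -> (forall y, F y -> exists n, P n y) -> exists n, forall y, F y -> P n y.
Proof.
move=> [l hl] hF.
suff [n hn] : exists n, forall y, y \in l -> F y -> P n y.
  by exists n => y Fy; apply: hn => //; apply/hl.
elim: l {hl} => [|a l [n1 IH]]; first by exists 0%N.
case: (classic (F a)) => [Fa|nFa].
  case: (hF a Fa) => na Pa; exists (maxn na n1) => y; rewrite in_cons => /orP [/eqP ->|yl] Fy.
    by apply: (mono na) => //; apply: leq_maxl.
  by apply: (mono n1); [apply: leq_maxr | apply: IH].
exists n1 => y; rewrite in_cons => /orP [/eqP ->|yl] Fy //; by [|apply: IH].
Qed.

Lemma factor_pos (G H : zmodType) (pi : G -> H) (pB : forall x y, pi (x - y) = pi x - pi y)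
  (surj : forall y, exists x, pi x = y) (phi : G -> G) (psi : H -> H) (psi0 : psi 0 = 0)
  (c : forall x, pi (phi x) = psi (pi x)) :
  torsion G -> pos_expansive phi -> pos_expansive psi.
Proof.
move=> tor [S [fS hS]]; exists (img pi S); split; first exact: image_fsg.
have fS' := image_fsg pB fS.
move=> F [_ fF]; apply: (@uniform _ _ _ F fF).
  by move=> n n' y le; apply: mono_pos => //; case: fS' => [[]].
move=> y _; case: (surj y) => x <-; case: (tor x) => m [m0 xm].
case: (hS _ (cyclic_fsg m0 xm)) => n hn; exists n; apply: push_pos => //.
by apply: hn; exists 1%N; split.
Qed.

Lemma factor_bil (G H : zmodType) (pi : G -> H) (pB : forall x y, pi (x - y) = pi x - pi y)
  (surj : forall y, exists x, pi x = y) (phi phii : G -> G) (psi psii : H -> H)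
  (psi0 : psi 0 = 0) (psii0 : psii 0 = 0)
  (c : forall x, pi (phi x) = psi (pi x)) (ci : forall x, pi (phii x) = psii (pi x)) :
  torsion G -> expansive phi phii -> expansive psi psii.
Proof.
move=> tor [S [fS hS]]; exists (img pi S); split; first exact: image_fsg.
have fS' := image_fsg pB fS.
move=> F [_ fF]; apply: (@uniform _ _ _ F fF).
  by move=> n n' y le; apply: mono_bil => //; case: fS' => [[]].
move=> y _; case: (surj y) => x <-; case: (tor x) => m [m0 xm].
case: (hS _ (cyclic_fsg m0 xm)) => n hn; exists n; apply: push_bil => //.
by apply: hn; exists 1%N; split.
Qed.

Lemma conj_pos (G H : zmodType) (pi : G -> H) (g : H -> G)
  (pB : forall x y, pi (x - y) = pi x - pi y) (c1 : cancel pi g) (c2 : cancel g pi)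
  (phi : G -> G) (psi : H -> H) (c : forall x, pi (phi x) = psi (pi x)) :
  pos_expansive phi -> pos_expansive psi.
Proof.
move=> [S [fS hS]]; exists (img pi S); split; first exact: image_fsg.
move=> F fF; case: (hS _ (pre_fsg pB c1 c2 fF)) => n hn; exists n => y Fy.
rewrite -(c2 y); apply: push_pos => //; apply: hn; by rewrite c2.
Qed.

Lemma conj_bil (G H : zmodType) (pi : G -> H) (g : H -> G)
  (pB : forall x y, pi (x - y) = pi x - pi y) (c1 : cancel pi g) (c2 : cancel g pi)
  (phi phii : G -> G) (psi psii : H -> H) (c : forall x, pi (phi x) = psi (pi x))
  (ci : forall x, pi (phii x) = psii (pi x)) :
  expansive phi phii -> expansive psi psii.
Proof.
move=> [S [fS hS]]; exists (img pi S); split; first exact: image_fsg.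
move=> F fF; case: (hS _ (pre_fsg pB c1 c2 fF)) => n hn; exists n => y Fy.
rewrite -(c2 y); apply: push_bil => //; apply: hn; by rewrite c2.
Qed.

Lemma inv_sub (G H : zmodType) (pi : G -> H) (g : H -> G)
  (pB : forall x y, pi (x - y) = pi x - pi y) (c1 : cancel pi g) (c2 : cancel g pi) :
  forall x y, g (x - y) = g x - g y.
Proof. by move=> x y; rewrite -{1}(c2 x) -{1}(c2 y) -pB c1. Qed.

Lemma inv_comm (G H : zmodType) (pi : G -> H) (g : H -> G) (c1 : cancel pi g) (c2 : cancel g pi)
  (phi : G -> G) (psi : H -> H) (c : forall x, pi (phi x) = psi (pi x)) :
  forall y, g (psi y) = phi (g y).
Proof. by move=> y; rewrite -{1}(c2 y) -c c1. Qed.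

Lemma commi (G H : zmodType) (pi : G -> H) (phi phii : G -> G) (psi psii : H -> H)
  (c : forall x, pi (phi x) = psi (pi x)) (h1 : cancel phi phii) (h2 : cancel phii phi)
  (k1 : cancel psi psii) : forall x, pi (phii x) = psii (pi x).
Proof. by move=> x; rewrite -{2}(h2 x) c k1. Qed.

Lemma cancel0 (G : zmodType) (f fi : G -> G) : f 0 = 0 -> cancel f fi -> fi 0 = 0.
Proof. by move=> f0 h; rewrite -{1}f0 h. Qed.

Arguments inv_sub {G H pi g} pB c1 c2.
Arguments inv_comm {G H pi g} c1 c2 {phi psi} c.
Arguments commi {G H pi phi phii psi psii} c h1 h2 k1.
Arguments cancel0 {G f fi} f0.
Arguments conj_pos {G H pi g} pB c1 c2 {phi psi} c.
Arguments conj_bil {G H pi g} pB c1 c2 {phi phii psi psii} c ci.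
Arguments factor_pos {G H pi} pB surj {phi psi} psi0 c.
Arguments factor_bil {G H pi} pB surj {phi phii psi psii} psi0 psii0 c ci.

Theorem proposition2p5 (G H : zmodType) (phi : {additive G -> G})
    (psi : {additive H -> H}) :
  is_factor phi psi ->
  (torsion G -> pos_expansive phi -> pos_expansive psi) /\
  (forall phii : G -> G, forall psii : H -> H,
     cancel phi phii -> cancel phii phi -> cancel psi psii -> cancel psii psi ->
     torsion G -> expansive phi phii -> expansive psi psii) /\
  (conjugate phi psi ->
     (pos_expansive phi <-> pos_expansive psi) /\
     (forall phii : G -> G, forall psii : H -> H,
        cancel phi phii -> cancel phii phi -> cancel psi psii -> cancel psii psi ->
        (expansive phi phii <-> expansive psi psii))).
Proof.
move=> [pi [surj c]]; have pB : forall x y, pi (x - y) = pi x - pi y by move=> x y; exact: raddfB.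
split; first by apply: factor_pos => //; exact: raddf0.
split.
  move=> phii psii h1 h2 k1 k2; apply: factor_bil => //.
  - exact: raddf0.
  - exact: cancel0 (raddf0 psi) k1.
  - exact: commi c h1 h2 k1.
move=> [p [[g c1 c2] cp]].
have pB' : forall x y, p (x - y) = p x - p y by move=> x y; exact: raddfB.
have gB := inv_sub pB' c1 c2.
have gc := inv_comm c1 c2 cp.
split.
  split; first by move=> hh; exact: (conj_pos pB' c1 c2 cp hh).
  by move=> hh; exact: (conj_pos gB c2 c1 gc hh).
move=> phii psii h1 h2 k1 k2; split.
  by move=> hh; exact: (conj_bil pB' c1 c2 cp (commi cp h1 h2 k1) hh).
by move=> hh; exact: (conj_bil gB c2 c1 gc (commi gc k1 k2 h1) hh).
Qed.
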